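(* Let $K$ be a connected CW complex, $f:K\to K$ a pointed cellular map with $f\circ f\simeq f$, and $H:K\times I\to K$ a (not necessarily pointed) homotopy from $f$ to $f^2$. Let $d:K\to\mathrm{Tel}(f)$ and $u:\mathrm{Tel}(f)\to K$ be the maps described in the context. Then $g=d\circ u:\mathrm{Tel}(f)\to\mathrm{Tel}(f)$ satisfies $g\circ g\simeq g$, and if $g$ splits then $f$ splits.
   Context: $\mathrm{Tel}(f)$ is the union over $n\in\mathbb{Z}$ of the unreduced mapping cylinders $M_n$ of $f:K_n\to K_{n+1}$, each $K_n$ a copy of $K$, glued along the $K_{n+1}$. The map $d:K\to\mathrm{Tel}(f)$ is $f$ regarded as a map into the copy $K_0$; $u:\mathrm{Tel}(f)\to K$ equals $f$ on each copy $K_n$ and equals $H(x,t)$ at the point $(x,t)$ of $M_n$. A map $h:X\to X$ splits if there are a space $L$ and maps $d':X\to L$, $u':L\to X$ with $d'\circ u'\simeq\mathrm{id}_L$ and $u'\circ d'\simeq h$. Homotopies are free. *)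

(* Defs.v *)
From HB Require Import structures.
From mathcomp Require Import all_boot all_order all_algebra all_classical all_reals topology generic_quotient.
From mathcomp Require Import Rstruct Rstruct_topology.
From Stdlib Require Relation_Operators.

Set Implicit Arguments.
Unset Strict Implicit.
Unset Printing Implicit Defensive.
Import Order.TTheory GRing.Theory Num.Theory.
Local Open Scope classical_set_scope.
Local Open Scope ring_scope.
Local Open Scope quotient_scope.

Notation R := Rdefinitions.R.

Definition I01 : topologicalType := (`[0, 1]%classic : set R).

Lemma I0_mem : (0 : R) \in (`[0, 1]%classic : set R).
Proof. by apply/mem_set; rewrite /= in_itv /= lexx ler01. Qed.
Lemma I1_mem : (1 : R) \in (`[0, 1]%classic : set R).
Proof. by apply/mem_set; rewrite /= in_itv /= lexx ler01. Qed.

Definition I0 : I01 := exist _ 0 I0_mem.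
Definition I1 : I01 := exist _ 1 I1_mem.

Definition homotopic {X Y : topologicalType} (f g : X -> Y) : Prop :=
  exists H : (X * I01)%type -> Y,
    continuous H /\ (forall x, H (x, I0) = f x) /\ (forall x, H (x, I1) = g x).

Definition splits {X : topologicalType} (h : X -> X) : Prop :=
  exists (L : topologicalType) (d' : X -> L) (u' : L -> X),
    continuous d' /\ continuous u' /\
    homotopic (d' \o u') idfun /\ homotopic (u' \o d') h.

Definition sqnorm n (x : 'rV[R]_n) : R := \sum_(i < n) x ord0 i ^+ 2.

Definition disk (n : nat) : topologicalType :=
  ([set x : 'rV[R]_n | sqnorm x <= 1] : set 'rV[R]_n).
Definition disk_int n : set (disk n) := [set p | sqnorm (val p) < 1].
Definition disk_bd n : set (disk n) := [set p | sqnorm (val p) = 1].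
Arguments disk_int n _ : clear implicits.
Arguments disk_bd n _ : clear implicits.

(* A CW structure on a space K (Whitehead / Hatcher appendix):
   characteristic maps Phi_a : D^n -> K for the n-cells a, such that
   - K is Hausdorff;
   - each Phi_a is continuous and restricts to a homeomorphism from the
     open disk onto its image, the open cell e_a;
   - K is the disjoint union of the open cells;
   - (closure finiteness) Phi_a maps the boundary sphere into the union
     of finitely many cells of dimension < n;
   - (weak topology) A is closed iff every Phi_a^-1(A) is closed. *)
Record CWstructure (K : topologicalType) := {
  cell : nat -> Type;
  charmap : forall n, cell n -> disk n -> K;
  cw_hausdorff : hausdorff_space K;
  charmap_cont : forall n (a : cell n), continuous (charmap a);
  charmap_inj : forall n (a : cell n),
      {in disk_int n &, injective (charmap a)};
  charmap_open : forall n (a : cell n) (U : set (disk n)), open U ->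
      exists V : set K, open V /\
        charmap a @` (U `&` disk_int n) = V `&` (charmap a @` disk_int n);
  cells_cover : forall x : K, exists n (a : cell n),
      (charmap a @` disk_int n) x;
  cells_disjoint : forall n m (a : cell n) (b : cell m) (x : K),
      (charmap a @` disk_int n) x -> (charmap b @` disk_int m) x ->
      existT cell n a = existT cell m b;
  closure_finite : forall n (a : cell n), exists s : seq {m : nat & cell m},
      (forall c, List.In c s -> (projT1 c < n)%N) /\
      forall y, disk_bd n y -> exists c, List.In c s /\
        (charmap (projT2 c) @` disk_int (projT1 c)) (charmap a y);
  weak_topology : forall A : set K,
      closed A <-> forall n (a : cell n), closed (charmap a @^-1` A)
}.

Definition open_cell K (C : CWstructure K) n (a : cell C n) : set K :=
  charmap a @` disk_int n.

Definition skeleton K (C : CWstructure K) (n : nat) : set K :=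
  [set x | exists m (a : cell C m), (m <= n)%N /\ open_cell a x].

Definition cellular K (C : CWstructure K) (f : K -> K) : Prop :=
  forall n, f @` skeleton C n `<=` skeleton C n.

(* The copy K_n
   is the image of K_n x {0}; the cylinder M_n is the image of
   K_n x I together with K_(n+1). *)
Section Telescope.
Context {K : topologicalType} (f : K -> K).

Definition tel_pre : topologicalType := {n : int & (K * I01)%type}.

Definition tel_step (a b : tel_pre) : Prop :=
  exists (n : int) (x : K),
    a = existT _ n (x, I1) /\ b = existT _ (n + 1)%R (f x, I0).

Definition tel_relP : tel_pre -> tel_pre -> Prop :=
  Relation_Operators.clos_refl_sym_trans _ tel_step.
Definition tel_relb (a b : tel_pre) : bool := `[< tel_relP a b >].

Lemma tel_relb_refl : reflexive tel_relb.
Proof. by move=> a; apply/asboolP; apply: Relation_Operators.rst_refl. Qed.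
Lemma tel_relb_sym : symmetric tel_relb.
Proof.
move=> a b; apply/idP/idP => /asboolP h; apply/asboolP; exact: Relation_Operators.rst_sym.
Qed.
Lemma tel_relb_trans : transitive tel_relb.
Proof.
move=> b a c /asboolP h1 /asboolP h2; apply/asboolP; exact: Relation_Operators.rst_trans h1 h2.
Qed.

Definition tel_rel := EquivRel _ tel_relb_refl tel_relb_sym tel_relb_trans.

Definition Tel : topologicalType :=
  quotient_topology {eq_quot tel_rel}.

Definition tel_pi : tel_pre -> Tel := \pi_({eq_quot tel_rel}).

Definition tel_d (x : K) : Tel := tel_pi (existT _ 0%R (f x, I0)).

(* u : Tel(f) -> K is H(x,t) at the point (x,t) of M_n (and f on each
   copy K_n, which is consistent since H(x,0) = f x, H(x,1) = f(f x)). *)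
Definition tel_u (H : (K * I01)%type -> K) (q : Tel) : K :=
  H (projT2 (repr (q : {eq_quot tel_rel}))).
End Telescope.

(* Main.v *)
Require Import Defs.
From mathcomp Require Import all_boot all_order all_algebra all_classical all_reals topology normedtype generic_quotient lra unstable.
From mathcomp Require Import Rstruct Rstruct_topology.
Set Implicit Arguments.
Unset Strict Implicit.
Import Order.TTheory GRing.Theory Num.Theory.
Local Open Scope classical_set_scope.
Local Open Scope ring_scope.

Definition clamp (r : R) : R := Num.max 0 (Num.min r 1).
Lemma clamp_mem r : clamp r \in (`[0, 1]%classic : set R).
Proof.
apply/mem_set; rewrite /= in_itv /= /clamp.
rewrite le_max lexx /= ge_max ler01 /= ge_min lexx orbT.
done.
Qed.
Definition mkI (r : R) : I01 := exist _ (clamp r) (clamp_mem r).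
Lemma clampE r : 0 <= r <= 1 -> clamp r = r.
Proof. by case/andP=> h0 h1; rewrite /clamp (min_l h1) (max_r h0). Qed.

Lemma cont_pair {X Y Z : topologicalType} (a : X -> Y) (b : X -> Z) :
  continuous a -> continuous b -> continuous (fun x => (a x, b x)).
Proof. move=> ca cb x; apply: cvg_pair; [exact: ca|exact: cb]. Qed.
Lemma cont_fst {X Y : topologicalType} : continuous (@fst X Y).
Proof. move=> x; exact: cvg_fst. Qed.
Lemma cont_snd {X Y : topologicalType} : continuous (@snd X Y).
Proof. move=> x; exact: cvg_snd. Qed.
Lemma cont_val : continuous (fun t : I01 => val t).
Proof. exact: initial_continuous. Qed.

Lemma cont_mkI {X : topologicalType} (phi : X -> R) : continuous phi -> continuous (mkI \o phi).
Proof.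
move=> cp; apply: continuous_comp_initial.
have -> : set_val \o (mkI \o phi) = (cst 0) \max ((phi \min (cst 1))) by [].
move=> x; apply: continuous_max; first exact: (@cst_continuous _ _ (0:R) x).
apply: continuous_min; [exact: cp|exact: (@cst_continuous _ _ (1:R) x)].
Qed.

Lemma cont_aff (a b : R) : continuous (fun r : R => a * r + b).
Proof.
move=> r; apply: (@continuousD _ R^o); last exact: cst_continuous.
apply: (@continuousM _ R^o); [exact: cst_continuous| by move=> ?; exact: cvg_id].
Qed.

Lemma cont_affI {X : topologicalType} (a b : R) :
  continuous (fun p : X * I01 => mkI (a * val p.2 + b)).
Proof.
apply: (@cont_mkI _ (fun p : X * I01 => a * val p.2 + b)) => w.
apply: (@continuous_comp _ _ _ (fun p : X * I01 => val p.2) (fun r => a * r + b)).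
  by apply: continuous_comp; [exact: cont_snd|exact: cont_val].
exact: cont_aff.
Qed.

Lemma hom_ext {X Y : topologicalType} (A A' B B' : X -> Y) :
  A =1 A' -> B =1 B' -> homotopic A B -> homotopic A' B'.
Proof.
move=> eA eB [G [cG [G0 G1]]]; exists G; split => //; split => x.
  by rewrite G0 eA.
by rewrite G1 eB.
Qed.

Lemma hom_comp_l {X Y Z : topologicalType} (k : Y -> Z) (A B : X -> Y) :
  continuous k -> homotopic A B -> homotopic (k \o A) (k \o B).
Proof.
move=> ck [G [cG [G0 G1]]]; exists (k \o G); split.
  by move=> z; apply: continuous_comp; [exact: cG|exact: ck].
by split => x /=; rewrite ?G0 ?G1.
Qed.

Lemma hom_comp_r {W X Y : topologicalType} (k : W -> X) (A B : X -> Y) :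
  continuous k -> homotopic A B -> homotopic (A \o k) (B \o k).
Proof.
move=> ck [G [cG [G0 G1]]]; exists (fun p => G (k p.1, p.2)); split.
  move=> z; apply: (@continuous_comp _ _ _ (fun p : W * I01 => (k p.1, p.2)) G).
    apply: cont_pair; last exact: cont_snd.
    by move=> w; apply: continuous_comp; [exact: cont_fst|exact: ck].
  exact: cG.
by split => x /=; rewrite ?G0 ?G1.
Qed.

Lemma I01_eq (s t : I01) : val s = val t -> s = t.
Proof. by move=> h; apply: eq_sig_hprop => // ?; exact: Prop_irrelevance. Qed.

Lemma val_in (t : I01) : 0 <= val t <= 1.
Proof. by case: t => /= r /set_mem; rewrite /= in_itv. Qed.

Lemma hom_sym {X Y : topologicalType} (A B : X -> Y) :
  homotopic A B -> homotopic B A.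
Proof.
move=> [G [cG [G0 G1]]].
exists (fun p => G (p.1, mkI (-1 * val p.2 + 1))); split.
  move=> z; apply: (@continuous_comp _ _ _ (fun p : X * I01 => (p.1, mkI (-1 * val p.2 + 1))) G).
    apply: cont_pair; first exact: cont_fst.
    exact: cont_affI.
  exact: cG.
split => x /=.
  rewrite -G1; congr G; congr pair; apply: I01_eq => /=.
  by rewrite mulr0 add0r clampE // ler01 lexx.
rewrite -G0; congr G; congr pair; apply: I01_eq => /=.
by rewrite mulN1r addNr clampE // ler01 lexx.
Qed.

Lemma mkIE r : 0 <= r <= 1 -> val (mkI r) = r.
Proof. exact: clampE. Qed.

Lemma hom_trans {X Y : topologicalType} (A B C : X -> Y) :
  homotopic A B -> homotopic B C -> homotopic A C.
Proof.
move=> [G [cG [G0 G1]]] [G' [cG' [G'0 G'1]]].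
pose Ga := fun p : X * I01 => G (p.1, mkI (2 * val p.2 + 0)).
pose Gb := fun p : X * I01 => G' (p.1, mkI (2 * val p.2 + -1)).
have cGa : continuous Ga.
  move=> z; apply: (@continuous_comp _ _ _ (fun p : X * I01 => (p.1, mkI (2 * val p.2 + 0))) G).
    by apply: cont_pair; [exact: cont_fst|exact: cont_affI].
  exact: cG.
have cGb : continuous Gb.
  move=> z; apply: (@continuous_comp _ _ _ (fun p : X * I01 => (p.1, mkI (2 * val p.2 + -1))) G').
    by apply: cont_pair; [exact: cont_fst|exact: cont_affI].
  exact: cG'.
pose S1 := [set p : X * I01 | val p.2 <= 2^-1].
pose S2 := [set p : X * I01 | 2^-1 <= val p.2].
have cv : continuous (fun p : X * I01 => val p.2).
  by move=> z; apply: continuous_comp; [exact: cont_snd|exact: cont_val].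
have cS1 : closed S1.
  have -> : S1 = (fun p : X * I01 => val p.2) @^-1` [set r : R | r <= 2^-1] by [].
  by move/continuous_closedP: cv; apply; exact: closed_le.
have cS2 : closed S2.
  have -> : S2 = (fun p : X * I01 => val p.2) @^-1` [set r : R | 2^-1 <= r] by [].
  by move/continuous_closedP: cv; apply; exact: closed_ge.
exists (fun p => if val p.2 <= 2^-1 then Ga p else Gb p); split.
  apply/continuous_subspace_setT.
  have -> : [set: X * I01] = S1 `|` S2.
    apply/seteqP; split => p _ //=; rewrite /S1 /S2 /=.
    by case: (lerP (val p.2) 2^-1) => h; [left|right; exact: ltW].
  apply: withinU_continuous => //.
    apply: (@subspace_eq_continuous _ _ _ Ga); last exact: continuous_subspaceT.
    by move=> p /set_mem; rewrite /S1 /from_subspace /= => ->.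
  apply: (@subspace_eq_continuous _ _ _ Gb); last exact: continuous_subspaceT.
  move=> p /set_mem; rewrite /S2 /from_subspace /= => h.
  case: ifP => // h2.
  have e : val p.2 = 2^-1 by apply/eqP; rewrite eq_le h h2.
  rewrite /Ga /Gb e.
  have -> : mkI (2 * 2^-1 + 0) = I1 by apply: I01_eq; rewrite mkIE /=; lra.
  have -> : mkI (2 * 2^-1 + -1) = I0 by apply: I01_eq; rewrite mkIE /=; lra.
  by rewrite G1 G'0.
split => x /=.
  have -> : (0 : R) <= 2^-1 by lra.
  rewrite /Ga /=.
  have -> : mkI (2 * 0 + 0) = I0 by apply: I01_eq; rewrite mkIE /=; lra.
  by rewrite G0.
have -> : ((1 : R) <= 2^-1) = false by apply/negbTE; rewrite -ltNge; lra.
rewrite /Gb /=.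
have -> : mkI (2 * 1 + -1) = I1 by apply: I01_eq; rewrite mkIE /=; lra.
by rewrite G'1.
Qed.

Local Open Scope quotient_scope.
Section TelLemmas.
Context {K : topologicalType} (f : K -> K) (H : (K * I01)%type -> K).
Hypothesis H0 : forall x, H (x, I0) = f x.
Hypothesis H1 : forall x, H (x, I1) = f (f x).

Lemma tel_inv a b : tel_relP f a b -> H (projT2 a) = H (projT2 b).
Proof.
elim => //= [x y [n [z [-> ->]]]|x y z _ -> _ ->] //=.
by rewrite H1 H0.
Qed.

Lemma tel_uE a : tel_u H (tel_pi f a) = H (projT2 a).
Proof.
rewrite /tel_u; apply: tel_inv.
have : tel_pi f (repr (tel_pi f a : {eq_quot tel_rel f})) = tel_pi f a by rewrite /tel_pi reprK.
by move/eqmodP => /asboolP.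
Qed.

Lemma tel_u_cont : continuous H -> continuous (tel_u H : Tel f -> K).
Proof.
move=> cH; apply/quotient_continuous.
have -> : (tel_u H \o \pi_({eq_quot tel_rel f})) = H \o sigT_fun (fun _ => id).
  by apply: funext => a /=; rewrite -[RHS](tel_uE a).
move=> z; apply: continuous_comp; last exact: cH.
by apply: sigT_continuous => i ? ; exact: cvg_id.
Qed.
End TelLemmas.

Definition tel_d' {K : topologicalType} (f : K -> K) (y : K) : Tel f :=
  tel_pi f (existT _ 0%R (y, I0)).

Lemma tel_d'_cont {K : topologicalType} (f : K -> K) : continuous (tel_d' f).
Proof.
move=> y; apply: (@continuous_comp _ _ _ (fun y => existT (fun _ : int => (K * I01)%type) 0%R (y, I0)) (tel_pi f)).
  apply: (@continuous_comp _ _ _ (fun y => (y, I0)) (existT _ 0%R)).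
    by apply: cont_pair; [move=> ?; exact: cvg_id|exact: cst_continuous].
  exact: existT_continuous.
exact: pi_continuous.
Qed.

Theorem lemma2p5 (K : topologicalType) (C : CWstructure K) (x0 : K)
  (f : K -> K) (H : (K * I01)%type -> K) :
  connected [set: K] ->
  skeleton C 0 x0 ->
  continuous f -> f x0 = x0 -> cellular C f ->
  homotopic (f \o f) f ->
  continuous H -> (forall x, H (x, I0) = f x) -> (forall x, H (x, I1) = f (f x)) ->
  let g := tel_d f \o tel_u H in
  homotopic (g \o g) g /\ (splits g -> splits f).
Proof.
move=> _ _ cf _ _ hff cH H0 H1 g.
have cu : continuous (tel_u H : Tel f -> K) := tel_u_cont H0 H1 cH.
have cd : continuous (tel_d f).
  by move=> x; apply: (@continuous_comp _ _ _ f (tel_d' f)); [exact: cf|exact: (@tel_d'_cont _ f)].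
have uE : forall x, tel_u H (tel_d f x) = f (f x).
  by move=> x; rewrite /tel_d (tel_uE H0 H1) /= H0.
have h3 : homotopic (f \o f \o f) f := hom_trans (hom_comp_r cf hff) hff.
split.
  have := hom_comp_r cu (hom_comp_l (@tel_d'_cont _ f) h3).
  by apply: hom_ext => q //=; rewrite /g /= !uE.
move=> [L [D [U [cD [cU [hDU hUD]]]]]].
have cDU : continuous (D \o U).
  by move=> x; apply: continuous_comp; [exact: cU|exact: cD].
exists L, (D \o tel_d f), (tel_u H \o U); split.
  by move=> x; apply: continuous_comp; [exact: cd|exact: cD].
split.
  by move=> x; apply: continuous_comp; [exact: cU|exact: cu].
split.
  have e1 := hom_comp_r cU (hom_comp_l cD (hom_sym hUD)).
  have e2 := hom_comp_l cDU hDU.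
  apply: (hom_trans (B := D \o U)); last exact: hDU.
  apply: (hom_trans (B := (D \o U) \o (D \o U))).
    by apply: hom_ext e1 => q //=.
  by apply: hom_ext e2 => q //=.
have e3 := hom_comp_r cd (hom_comp_l cu hUD).
have e4 := hom_comp_r cf h3.
apply: hom_trans (hom_trans e4 hff).
by apply: hom_ext e3 => q //=; rewrite /g /= !uE.
Qed.
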